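(* Consider the closed-loop battery recycling model described in the context, and assume the data satisfy: the demands $d$, supplies $s$, costs $c$, values $v$, probabilities $p$ and material coefficients $\Delta$ are nonnegative, $u^{\mathrm{REC}}>0$, $u^{\mathrm{CP}}>0$, $\gamma\in[0,1)$, and every facility cost function $f$ is concave and monotonically increasing on $[0,\infty)$ with $f(0)=0$. Let $\overline{y}=(\overline{y}^{\mathrm{REC}},\overline{y}^{\mathrm{CP}})\geq 0$ satisfy the capacity-monotonicity constraints (Cap3), (Cap4) and the upper bounds (Cap5), (Cap6). Then there exists $x\geq 0$ such that $(\overline{y},x)$ satisfies all of the production constraints (Prod1)–(Prod5), the inventory constraints (Inv1)–(Inv4), and the capacity constraints (Cap1)–(Cap6); i.e. $\{(y,x)\geq 0 : (\mathrm{Prod}),(\mathrm{Inv}),(\mathrm{Cap}),\ y=\overline{y}\}\neq\emptyset$.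
   Context: Index sets (all finite): battery chemistries $\mathcal{I}$; recycling processes $\mathcal{J}$; materials $\mathcal{K}$ with a subset of cathode powders $\mathcal{K}^{\mathrm{CP}}\subseteq\mathcal{K}$; zones $\mathcal{Z}$; time periods $\mathcal{T}=\{1,\dots,T\}$; planning periods $\mathcal{L}=\{1,\dots,L\}$, where $\{\mathcal{T}_l\}_{l\in\mathcal{L}}$ is a partition of $\mathcal{T}$; stages $\mathcal{S}=\{1,\dots,S\}$, with $\sigma_t\in\mathcal{S}$ the stage of period $t\in\mathcal{T}\cup\{0\}$. For each stage $\sigma$, $\Omega_\sigma$ is a finite nonempty set of scenario-tree nodes. For each node $\omega$ there is an ancestor map $a_\omega$ assigning to each $t\in\mathcal{T}\cup\{0\}$ a node $a_\omega(t)\in\Omega_{\sigma_t}$, with $a_\omega(t)=\omega$ whenever $\omega\in\Omega_{\sigma_t}$. For each $l\in\mathcal{L}$ there is a positive integer $N^{\mathrm{REC}}_l$ with $\mathcal{N}^{\mathrm{REC}}_l=\{1,\dots,N^{\mathrm{REC}}_l\}$, and for each $l\in\mathcal{L},k\in\mathcal{K}^{\mathrm{CP}}$ a positive integer $N^{\mathrm{CP}}_{l,k}$ with $\mathcal{N}^{\mathrm{CP}}_{l,k}=\{1,\dots,N^{\mathrm{CP}}_{l,k}\}$. Data: $\Delta^{\mathrm{NB}}_{i,k}$ ($i\in\mathcal{I},k\in\mathcal{K}$), $\Delta^{\mathrm{CP}}_{k',k}$ ($k'\in\mathcal{K}^{\mathrm{CP}},k\in\mathcal{K}\setminus\mathcal{K}^{\mathrm{CP}}$),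 $\Delta^{\mathrm{MC}}_{k',k}$ ($k',k\in\mathcal{K}\setminus\mathcal{K}^{\mathrm{CP}}$), $\Delta^{\mathrm{REC}}_{k,i,j}$ ($k\in\mathcal{K},i\in\mathcal{I},j\in\mathcal{J}$); demand $d_{\omega,z,t,i}$ and retired-battery supply $s_{\omega,z,t,i}$ for $t\in\mathcal{T}$, $\omega\in\Omega_{\sigma_t}$; maximum capacities $u^{\mathrm{REC}},u^{\mathrm{CP}}$. Operational variables (indexed by $t\in\mathcal{T}$, $z\in\mathcal{Z}$, $\omega\in\Omega_{\sigma_t}$, plus $t=0$ for inventories): $x^{\mathrm{NM,NB}}_{\omega,z,t,k},x^{\mathrm{RM,INV}}_{\omega,z,t,k},x^{\mathrm{RM,S}}_{\omega,z,t,k},x^{\mathrm{INV}}_{\omega,z,t,k}$ ($k\in\mathcal{K}$); $x^{\mathrm{INV,NB}}_{\omega,z,t,k},x^{\mathrm{CP,INV}}_{\omega,z,t,k}$ ($k\in\mathcal{K}^{\mathrm{CP}}$); $x^{\mathrm{NM,CP}}_{\omega,z,t,k},x^{\mathrm{MC,CP}}_{\omega,z,t,k},x^{\mathrm{INV,MC}}_{\omega,z,t,k}$ ($k\in\mathcal{K}\setminus\mathcal{K}^{\mathrm{CP}}$); $x^{\mathrm{RB}}_{\omega,z,t,i}$ ($i\in\mathcal{I}$); $x^{\mathrm{RB,RM}}_{\omega,z,t,i,j}$; transports $x^{\mathrm{TR,RM}}_{\omega,z,z',t,k}$ and $x^{\mathrm{TR,RB}}_{\omega,z,z',t,i}$ for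 $z'\neq z$. Capacity variables: $y^{\mathrm{REC}}_{z,l,j,n}$ ($n\in\mathcal{N}^{\mathrm{REC}}_l$) and $y^{\mathrm{CP}}_{z,l,k,n}$ ($k\in\mathcal{K}^{\mathrm{CP}}$, $n\in\mathcal{N}^{\mathrm{CP}}_{l,k}$). Production constraints, for all $t\in\mathcal{T},z\in\mathcal{Z},\omega\in\Omega_{\sigma_t}$: (Prod1) $\sum_{i}\Delta^{\mathrm{NB}}_{i,k}d_{\omega,z,t,i}=x^{\mathrm{NM,NB}}_{\omega,z,t,k}+x^{\mathrm{INV,NB}}_{\omega,z,t,k}$ for $k\in\mathcal{K}^{\mathrm{CP}}$; (Prod2) $\sum_{i}\Delta^{\mathrm{NB}}_{i,k}d_{\omega,z,t,i}=x^{\mathrm{NM,NB}}_{\omega,z,t,k}$ for $k\in\mathcal{K}\setminus\mathcal{K}^{\mathrm{CP}}$; (Prod3) $\sum_{k'\in\mathcal{K}^{\mathrm{CP}}}\Delta^{\mathrm{CP}}_{k',k}x^{\mathrm{CP,INV}}_{\omega,z,t,k'}=x^{\mathrm{NM,CP}}_{\omega,z,t,k}+x^{\mathrm{MC,CP}}_{\omega,z,t,k}$ for $k\in\mathcal{K}\setminus\mathcal{K}^{\mathrm{CP}}$; (Prod4) $\sum_{k'\in\mathcal{K}\setminus\mathcal{K}^{\mathrm{CP}}}\Delta^{\mathrm{MC}}_{k',k}x^{\mathrm{MC,CP}}_{\omega,z,t,k'}=x^{\mathrm{INV,MC}}_{\omega,z,t,k}$ for $k\in\mathcal{K}\setminus\mathcal{K}^{\mathrm{CP}}$;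 (Prod5) $x^{\mathrm{RM,INV}}_{\omega,z,t,k}+x^{\mathrm{RM,S}}_{\omega,z,t,k}=\sum_{i,j}\Delta^{\mathrm{REC}}_{k,i,j}x^{\mathrm{RB,RM}}_{\omega,z,t,i,j}$ for $k\in\mathcal{K}$. Inventory constraints: (Inv1) $x^{\mathrm{RB}}_{\omega,z,0,i}=0$ and (Inv2) $x^{\mathrm{INV}}_{\omega,z,0,k}=0$ for all $\omega\in\Omega_{\sigma_0}$; and for all $t\in\mathcal{T},z,\omega\in\Omega_{\sigma_t}$, with $\omega'=a_\omega(t-1)$: (Inv3) $x^{\mathrm{RB}}_{\omega,z,t,i}=x^{\mathrm{RB}}_{\omega',z,t-1,i}+\sum_{z'\neq z}(x^{\mathrm{TR,RB}}_{\omega,z',z,t,i}-x^{\mathrm{TR,RB}}_{\omega,z,z',t,i})+s_{\omega,z,t,i}-\sum_{j}x^{\mathrm{RB,RM}}_{\omega,z,t,i,j}$; (Inv4) for $k\in\mathcal{K}\setminus\mathcal{K}^{\mathrm{CP}}$: $x^{\mathrm{INV}}_{\omega,z,t,k}=x^{\mathrm{INV}}_{\omega',z,t-1,k}+\sum_{z'\neq z}(x^{\mathrm{TR,RM}}_{\omega,z',z,t,k}-x^{\mathrm{TR,RM}}_{\omega,z,z',t,k})+x^{\mathrm{RM,INV}}_{\omega,z,t,k}-x^{\mathrm{INV,MC}}_{\omega,z,t,k}$, and for $k\in\mathcal{K}^{\mathrm{CP}}$: $x^{\mathrm{INV}}_{\omega,z,t,k}=x^{\mathrm{INV}}_{\omega',z,t-1,k}+\sum_{z'\neq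 z}(x^{\mathrm{TR,RM}}_{\omega,z',z,t,k}-x^{\mathrm{TR,RM}}_{\omega,z,z',t,k})+x^{\mathrm{RM,INV}}_{\omega,z,t,k}+x^{\mathrm{CP,INV}}_{\omega,z,t,k}-x^{\mathrm{INV,NB}}_{\omega,z,t,k}$. Capacity constraints: (Cap1) $\sum_{n\in\mathcal{N}^{\mathrm{REC}}_l}y^{\mathrm{REC}}_{z,l,j,n}\geq\sum_i x^{\mathrm{RB,RM}}_{\omega,z,t,i,j}$ for all $j,l,t\in\mathcal{T}_l,z,\omega\in\Omega_{\sigma_t}$; (Cap2) $\sum_{n\in\mathcal{N}^{\mathrm{CP}}_{l,k}}y^{\mathrm{CP}}_{z,l,k,n}\geq x^{\mathrm{CP,INV}}_{\omega,z,t,k}$ for all $k\in\mathcal{K}^{\mathrm{CP}},l,t\in\mathcal{T}_l,z,\omega\in\Omega_{\sigma_t}$; (Cap3) $\sum_{n\in\mathcal{N}^{\mathrm{REC}}_l}y^{\mathrm{REC}}_{z,l,j,n}\geq\sum_{n\in\mathcal{N}^{\mathrm{REC}}_{l-1}}y^{\mathrm{REC}}_{z,l-1,j,n}$ for $l\geq2$; (Cap4) $\sum_{n\in\mathcal{N}^{\mathrm{CP}}_{l,k}}y^{\mathrm{CP}}_{z,l,k,n}\geq\sum_{n\in\mathcal{N}^{\mathrm{CP}}_{l-1,k}}y^{\mathrm{CP}}_{z,l-1,k,n}$ for $l\geq2$; (Cap5) $y^{\mathrm{REC}}_{z,l,j,n}\leq u^{\mathrm{REC}}$; (Cap6) $y^{\mathrm{CP}}_{z,l,k,n}\leq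 u^{\mathrm{CP}}$. *)

(* Defs.v *)
From HB Require Import structures.
From mathcomp Require Import all_boot all_order all_algebra.
Set Implicit Arguments. Unset Strict Implicit. Unset Printing Implicit Defensive.
Import Order.TTheory GRing.Theory Num.Theory.
Local Open Scope ring_scope.

(* Time periods are the naturals 1..T (plus 0 for initial inventories),
   planning periods are 1..L, stages 1..S.  Scenario-tree nodes are the
   elements of a finite type [Node]; stg w is the stage of node w, so
   Omega_sigma = [set w | stg w = sigma].  anc w t is the ancestor a_w(t). *)

Section Model.
Variables (R : realFieldType) (I J K Z Node : finType).
Variable KCP : {set K}.
Variables (T L S : nat).
Variable sigma : nat -> nat.            (* stage of time period t *)
Variable stg : Node -> nat.
Variable anc : Node -> nat -> Node.
Variable lof : nat -> nat.              (* t \in T_l  <->  lof t = l *)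
Variables (NREC : nat -> nat) (NCP : nat -> K -> nat).

Definition inT (t : nat) := (1 <= t <= T)%N.
Definition inT0 (t : nat) := (t <= T)%N.
Definition inL (l : nat) := (1 <= l <= L)%N.

Definition index_ok : Prop :=
  [/\ (forall t, inT0 t -> (1 <= sigma t <= S)%N),
      (forall sg, (1 <= sg <= S)%N -> exists w : Node, stg w = sg),
      (forall w t, inT0 t -> stg (anc w t) = sigma t),
      (forall w t, inT0 t -> stg w = sigma t -> anc w t = w) &
    [/\ (forall t, inT t -> inL (lof t)),
      (forall l, inL l -> (0 < NREC l)%N) &
      (forall l k, inL l -> k \in KCP -> (0 < NCP l k)%N)]].

Record opvars := OpVars {
  xNMNB : Node -> Z -> nat -> K -> R;
  xRMINV : Node -> Z -> nat -> K -> R;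
  xRMS : Node -> Z -> nat -> K -> R;
  xINV : Node -> Z -> nat -> K -> R;
  xINVNB : Node -> Z -> nat -> K -> R;   (* used for k \in KCP *)
  xCPINV : Node -> Z -> nat -> K -> R;   (* used for k \in KCP *)
  xNMCP : Node -> Z -> nat -> K -> R;    (* used for k \notin KCP *)
  xMCCP : Node -> Z -> nat -> K -> R;    (* used for k \notin KCP *)
  xINVMC : Node -> Z -> nat -> K -> R;   (* used for k \notin KCP *)
  xRB : Node -> Z -> nat -> I -> R;
  xRBRM : Node -> Z -> nat -> I -> J -> R;
  xTRRM : Node -> Z -> Z -> nat -> K -> R;  (* from z to z' *)
  xTRRB : Node -> Z -> Z -> nat -> I -> R   (* from z to z' *)
}.

Definition x_nonneg (x : opvars) : Prop :=
  (forall t w z, inT t -> stg w = sigma t ->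
     [/\ (forall k, [/\ 0 <= xNMNB x w z t k, 0 <= xRMINV x w z t k &
                      0 <= xRMS x w z t k]),
         (forall k, k \in KCP -> 0 <= xINVNB x w z t k /\ 0 <= xCPINV x w z t k),
         (forall k, k \notin KCP ->
            [/\ 0 <= xNMCP x w z t k, 0 <= xMCCP x w z t k & 0 <= xINVMC x w z t k]),
         (forall i j, 0 <= xRBRM x w z t i j) &
         (forall z', z' != z -> (forall k, 0 <= xTRRM x w z z' t k) /\
                               (forall i, 0 <= xTRRB x w z z' t i))]) /\
  (forall t w z, inT0 t -> stg w = sigma t ->
     (forall k, 0 <= xINV x w z t k) /\ (forall i, 0 <= xRB x w z t i)).

Variables (DNB : I -> K -> R) (DCP : K -> K -> R) (DMC : K -> K -> R)
          (DREC : K -> I -> J -> R).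
Variables (d s : Node -> Z -> nat -> I -> R).
Variables (uREC uCP : R).

Definition prod_constraints (x : opvars) : Prop :=
  forall t z w, inT t -> stg w = sigma t ->
  [/\ (forall k, k \in KCP ->
         \sum_i DNB i k * d w z t i = xNMNB x w z t k + xINVNB x w z t k),
      (forall k, k \notin KCP ->
         \sum_i DNB i k * d w z t i = xNMNB x w z t k),
      (forall k, k \notin KCP ->
         \sum_(k' in KCP) DCP k' k * xCPINV x w z t k'
           = xNMCP x w z t k + xMCCP x w z t k),
      (forall k, k \notin KCP ->
         \sum_(k' | k' \notin KCP) DMC k' k * xMCCP x w z t k' = xINVMC x w z t k) &
      (forall k, xRMINV x w z t k + xRMS x w z t k
         = \sum_i \sum_j DREC k i j * xRBRM x w z t i j)].

Definition inv_constraints (x : opvars) : Prop :=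
  [/\ (forall w z i, stg w = sigma 0 -> xRB x w z 0 i = 0),
      (forall w z k, stg w = sigma 0 -> xINV x w z 0 k = 0),
      (forall t z w i, inT t -> stg w = sigma t ->
         xRB x w z t i = xRB x (anc w t.-1) z t.-1 i
           + \sum_(z' | z' != z) (xTRRB x w z' z t i - xTRRB x w z z' t i)
           + s w z t i - \sum_j xRBRM x w z t i j) &
      (forall t z w k, inT t -> stg w = sigma t ->
         xINV x w z t k = xINV x (anc w t.-1) z t.-1 k
           + \sum_(z' | z' != z) (xTRRM x w z' z t k - xTRRM x w z z' t k)
           + xRMINV x w z t k
           + (if k \in KCP then xCPINV x w z t k - xINVNB x w z t k
              else - xINVMC x w z t k))].

Definition sumREC (yREC : Z -> nat -> J -> nat -> R) z l j :=
  \sum_(1 <= n < (NREC l).+1) yREC z l j n.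
Definition sumCP (yCP : Z -> nat -> K -> nat -> R) z l k :=
  \sum_(1 <= n < (NCP l k).+1) yCP z l k n.

(* (Cap3)-(Cap6): the constraints involving only y *)
Definition cap_y_constraints (yREC : Z -> nat -> J -> nat -> R)
    (yCP : Z -> nat -> K -> nat -> R) : Prop :=
  [/\ (forall z l j, (2 <= l <= L)%N -> sumREC yREC z l j >= sumREC yREC z l.-1 j),
      (forall z l k, (2 <= l <= L)%N -> k \in KCP ->
          sumCP yCP z l k >= sumCP yCP z l.-1 k),
      (forall z l j n, inL l -> (1 <= n <= NREC l)%N -> yREC z l j n <= uREC) &
      (forall z l k n, inL l -> k \in KCP -> (1 <= n <= NCP l k)%N ->
          yCP z l k n <= uCP)].

Definition cap_constraints (yREC : Z -> nat -> J -> nat -> R)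
    (yCP : Z -> nat -> K -> nat -> R) (x : opvars) : Prop :=
  [/\ (forall j l t z w, inL l -> inT t -> lof t = l -> stg w = sigma t ->
         sumREC yREC z l j >= \sum_i xRBRM x w z t i j),
      (forall k l t z w, k \in KCP -> inL l -> inT t -> lof t = l -> stg w = sigma t ->
         sumCP yCP z l k >= xCPINV x w z t k) &
      cap_y_constraints yREC yCP].

Definition y_nonneg (yREC : Z -> nat -> J -> nat -> R)
    (yCP : Z -> nat -> K -> nat -> R) : Prop :=
  (forall z l j n, inL l -> (1 <= n <= NREC l)%N -> 0 <= yREC z l j n) /\
  (forall z l k n, inL l -> k \in KCP -> (1 <= n <= NCP l k)%N -> 0 <= yCP z l k n).

Definition data_ok : Prop :=
  [/\ (forall i k, 0 <= DNB i k),
      (forall k' k, k' \in KCP -> k \notin KCP -> 0 <= DCP k' k),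
      (forall k' k, k' \notin KCP -> k \notin KCP -> 0 <= DMC k' k),
      (forall k i j, 0 <= DREC k i j) /\
      (forall t w z i, inT t -> stg w = sigma t -> 0 <= d w z t i /\ 0 <= s w z t i) &
      0 < uREC /\ 0 < uCP].

End Model.

(* Main.v *)
Require Import Defs.
From mathcomp Require Import all_boot all_order all_algebra.
Import Order.TTheory GRing.Theory Num.Theory.
Local Open Scope ring_scope.

Fixpoint cumRB (R : realFieldType) (I Z Node : finType) (anc : Node -> nat -> Node)
  (s : Node -> Z -> nat -> I -> R) (t : nat) (w : Node) (z : Z) (i : I) : R :=
  match t with
  | 0 => 0
  | t'.+1 => @cumRB R I Z Node anc s t' (anc w t') z i + s w z t'.+1 i
  end.

Theorem proposition1
  (R : realFieldType) (I J K Z Node : finType) (KCP : {set K})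
  (T L S : nat) (sigma : nat -> nat) (stg : Node -> nat)
  (anc : Node -> nat -> Node) (lof : nat -> nat)
  (NREC : nat -> nat) (NCP : nat -> K -> nat)
  (DNB : I -> K -> R) (DCP DMC : K -> K -> R) (DREC : K -> I -> J -> R)
  (d s : Node -> Z -> nat -> I -> R) (uREC uCP gamma : R)
  (Hidx : index_ok KCP T L S sigma stg anc lof NREC NCP)
  (Hdata : data_ok KCP T sigma stg DNB DCP DMC DREC d s uREC uCP)
  (Hgamma : 0 <= gamma < 1)
  (yREC : Z -> nat -> J -> nat -> R) (yCP : Z -> nat -> K -> nat -> R)
  (Hy0 : y_nonneg KCP L NREC NCP yREC yCP)
  (Hy : cap_y_constraints KCP L NREC NCP uREC uCP yREC yCP) :
  exists x : opvars R I J K Z Node,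
    [/\ x_nonneg KCP T sigma stg x,
        prod_constraints KCP T sigma stg DNB DCP DMC DREC d x,
        inv_constraints KCP T sigma stg anc s x &
        cap_constraints KCP T L sigma stg lof NREC NCP uREC uCP yREC yCP x].
Proof.
case: Hidx => _ _ Hanc _ [Hlof _ _].
case: Hdata => HDNB _ _ [_ Hds] _.
case: Hy0 => HyR HyC.
pose z0 := fun (_ : Node) (_ : Z) (_ : nat) (_ : K) => (0 : R).
exists (OpVars (fun w z t k => \sum_i DNB i k * d w z t i) z0 z0 z0 z0 z0 z0 z0 z0
   (fun w z t i => @cumRB R I Z Node anc s t w z i) (fun _ _ _ _ _ => 0) (fun _ _ _ _ _ => 0) (fun _ _ _ _ _ => 0)).
have cumP : forall t, inT0 T t -> forall w z i, stg w = sigma t -> 0 <= @cumRB R I Z Node anc s t w z i.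
  elim=> [|t IH] Ht w z i Hw /=; first by [].
  apply: addr_ge0.
    apply: IH; first by rewrite /inT0 in Ht *; apply: ltnW.
    by apply: Hanc; rewrite /inT0 in Ht *; apply: ltnW.
  by case: (Hds t.+1 w z i _ Hw) => //; rewrite /inT /=.
split.
- split.
    move=> t w z Ht Hw /=; split.
    + move=> k; split => //; apply: sumr_ge0 => i _; apply: mulr_ge0 => //.
      by case: (Hds t w z i Ht Hw).
    + by [].
    + by [].
    + by [].
    + by move=> z' _; split.
  move=> t w z Ht Hw /=; split => // i; exact: cumP.
- move=> t z w Ht Hw; split => /=.
  + by move=> k Hk; rewrite /z0 addr0.
  + by [].
  + by move=> k Hk; rewrite /z0 addr0 big1 // => k' _; rewrite mulr0.
  + by move=> k Hk; rewrite /z0 big1 // => k' _; rewrite mulr0.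
  + by move=> k; rewrite /z0 addr0 big1 // => i _; rewrite big1 // => j _; rewrite mulr0.
- split => //=.
  + move=> t z w i Ht Hw; case: t Ht Hw => [//|t] Ht Hw /=.
    rewrite big1 ?addr0; last by move=> z' _; rewrite subr0.
    by rewrite big1 ?subr0.
  + move=> t z w k Ht Hw; rewrite /z0 big1 ?addr0; last by move=> z' _; rewrite subr0.
    case: (k \in KCP); rewrite ?subr0 ?oppr0 ?addr0 //.
- split => //.
  + move=> j l t z w Hl Ht Hlt Hw; rewrite big1 // /sumREC.
    rewrite big_nat; apply: sumr_ge0 => n /andP[H1 H2]; apply: HyR => //.
    by rewrite H1 -ltnS.
  + move=> k l t z w Hk Hl Ht Hlt Hw /=; rewrite /sumCP.
    rewrite big_nat; apply: sumr_ge0 => n /andP[H1 H2]; apply: HyC => //.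
    by rewrite H1 -ltnS.
Qed.
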